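(* Assume (H1) and (H2), and suppose that the limit $$b=\lim_{z\to\infty}q'(z)\int_z^\infty\frac{dx}{q(x)}$$ exists in $\mathbb R$. Then $b\ge0$, $$\lim_{z\to\infty}\frac{q'(z)}{q(z)}\sqrt{\int_z^\infty\frac{dx}{q(x)}}=0,$$ and $$\lim_{z\to\infty}\frac{\int_z^\infty q(x)^{-1}dx}{q(z)^2\int_z^\infty q(x)^{-3}dx}=2b+1.$$
   Context: Let $q\in C^1([0,\infty))$ and $\gamma(y)=2\int_0^yq$. (H1): $\int_0^\infty e^{\gamma(y)}\int_y^\infty e^{-\gamma(\xi)}d\xi\,dy<\infty$. (H2): $\lim_{x\to\infty}q(x)=\infty$ and $\lim_{x\to\infty}q'(x)/q(x)^2=0$. (Under (H1),(H2), $\int_z^\infty q^{-1}<\infty$ for large $z$.) *)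

(* Defs.v *)
From Stdlib Require Import Reals Lra Classical ClassicalEpsilon.
Open Scope R_scope.

(* Riemann integral of f over [a,b] as a total function:
   the Stdlib RiemannInt when f is Riemann integrable on [a,b], junk 0 otherwise.
   (RiemannInt does not depend on the integrability proof, RiemannInt_P5.) *)
Definition Rint (f : R -> R) (a b : R) : R :=
  match excluded_middle_informative (exists _ : Riemann_integrable f a b, True) with
  | left H => RiemannInt (proj1_sig (constructive_indefinite_description _ H))
  | right _ => 0
  end.

Definition lim_infty (f : R -> R) (l : R) : Prop :=
  forall eps, 0 < eps -> exists M, forall x, M <= x -> Rabs (f x - l) < eps.

Definition tends_infty (f : R -> R) : Prop :=
  forall A, exists M, forall x, M <= x -> A < f x.

Definition improper_int (f : R -> R) (a L : R) : Prop :=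
  (forall b, a <= b -> exists _ : Riemann_integrable f a b, True) /\
  lim_infty (fun b => Rint f a b) L.

(* Value of int_a^infty f (junk 0 if it does not converge). *)
Definition Iinf (f : R -> R) (a : R) : R :=
  match excluded_middle_informative (exists L, improper_int f a L) with
  | left H => proj1_sig (constructive_indefinite_description _ H)
  | right _ => 0
  end.

Definition gamma (q : R -> R) (y : R) : R := 2 * Rint q 0 y.

Definition H1 (q : R -> R) : Prop :=
  (forall y, 0 <= y -> exists L, improper_int (fun xi => exp (- gamma q xi)) y L) /\
  exists L, improper_int
              (fun y => exp (gamma q y) * Iinf (fun xi => exp (- gamma q xi)) y) 0 L.

(* Hypothesis (H2), dq being the derivative q' *)
Definition H2 (q dq : R -> R) : Prop :=
  tends_infty q /\ lim_infty (fun x => dq x / (q x)^2) 0.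

(* Main.v *)
Require Import Defs.
From Stdlib Require Import Reals Lra Classical ClassicalEpsilon.
From Coquelicot Require Import Coquelicot.
Open Scope R_scope.
Open Scope R_scope.

Lemma Rint_RInt (f:R->R) a b : ex_RInt f a b -> Rint f a b = RInt f a b.
Proof.
  intros H. unfold Rint.
  destruct excluded_middle_informative as [e|n].
  - destruct constructive_indefinite_description as [pr Hpr]. simpl.
    symmetry; apply RInt_Reals.
  - exfalso; apply n. exists (ex_RInt_Reals_0 _ _ _ H); trivial.
Qed.

Lemma lim_unique g L1 L2 : lim_infty g L1 -> lim_infty g L2 -> L1 = L2.
Proof.
  intros H1' H2'. destruct (Req_dec L1 L2) as [|Hn]; auto.
  assert (He : 0 < Rabs (L1 - L2) / 2).
  { apply Rdiv_lt_0_compat; [apply Rabs_pos_lt; lra| lra]. }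
  destruct (H1' _ He) as [M1 HM1]. destruct (H2' _ He) as [M2 HM2].
  specialize (HM1 (Rmax M1 M2) (Rmax_l _ _)). specialize (HM2 (Rmax M1 M2) (Rmax_r _ _)).
  exfalso. revert HM1 HM2. set (y := g (Rmax M1 M2)).
  unfold Rabs; repeat destruct Rcase_abs; lra.
Qed.

Lemma Iinf_eq f a L : improper_int f a L -> Iinf f a = L.
Proof.
  intros H. unfold Iinf. destruct excluded_middle_informative as [e|n].
  - destruct constructive_indefinite_description as [L' HL']. simpl.
    eapply lim_unique; [apply HL'|apply H].
  - exfalso; apply n; eauto.
Qed.

Lemma cont_ex_RInt (f : R -> R) a b : (forall x, a <= x -> continuous f x) -> a <= b -> ex_RInt f a b.
Proof.
  intros Hc Hab. apply (ex_RInt_continuous (V:=R_CompleteNormedModule)). intros z Hz. apply Hc.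
  rewrite Rmin_left in Hz; lra.
Qed.

Lemma mono_le_lim (G : R -> R) a L :
  (forall x y, a <= x <= y -> G x <= G y) -> lim_infty G L -> forall x, a <= x -> G x <= L.
Proof.
  intros Hm Hl x Hx. destruct (Rle_dec (G x) L) as [|Hn]; auto.
  assert (He : 0 < G x - L) by lra.
  destruct (Hl _ He) as [M HM]. specialize (HM (Rmax M x) (Rmax_l _ _)).
  assert (G x <= G (Rmax M x)) by (apply Hm; split; [lra|apply Rmax_r]).
  revert HM. unfold Rabs; destruct Rcase_abs; lra.
Qed.

Lemma lim_ge0 (G : R -> R) a L : (forall x, a <= x -> 0 <= G x) -> lim_infty G L -> 0 <= L.
Proof.
  intros Hp Hl. destruct (Rle_dec 0 L) as [|Hn]; auto.
  assert (He : 0 < - L) by lra.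
  destruct (Hl _ He) as [M HM]. specialize (HM (Rmax M a) (Rmax_l _ _)).
  specialize (Hp (Rmax M a) (Rmax_r _ _)).
  revert HM. unfold Rabs; destruct Rcase_abs; lra.
Qed.

Lemma Rint_nonneg_mono f a : (forall x, a <= x -> continuous f x) -> (forall x, a <= x -> 0 <= f x) ->
  forall x y, a <= x <= y -> RInt f a x <= RInt f a y.
Proof.
  intros Hc Hp x y Hxy.
  rewrite <- (RInt_Chasles f a x y); try (apply cont_ex_RInt; intros; try apply Hc; lra).
  simpl. unfold plus; simpl.
  assert (0 <= RInt f x y); [|lra].
  apply RInt_ge_0; [lra| |].
  - apply (ex_RInt_continuous (V:=R_CompleteNormedModule)). intros z Hz. apply Hc. rewrite Rmin_left in Hz; lra.
  - intros; apply Hp; lra.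
Qed.

Lemma mono_conv f a M : (forall x, a <= x -> continuous f x) -> (forall x, a <= x -> 0 <= f x) ->
  (forall b, a <= b -> RInt f a b <= M) -> exists L, improper_int f a L.
Proof.
  intros Hc Hp HM.
  set (E := fun y => exists b, a <= b /\ y = RInt f a b).
  assert (Hbd : bound E) by (exists M; intros y [b [Hb ->]]; auto).
  assert (Hne : exists y, E y) by (exists (RInt f a a); exists a; split; [lra|auto]).
  destruct (completeness E Hbd Hne) as [L [HL1 HL2]].
  exists L. split.
  - intros b Hab. exists (ex_RInt_Reals_0 _ _ _ (cont_ex_RInt f a b Hc Hab)); trivial.
  - intros eps Heps.
    destruct (classic (exists b, a <= b /\ L - eps < RInt f a b)) as [[b0 [Hb0 Hlt]]|Hn].
    + exists b0. intros x Hx. rewrite Rint_RInt by (apply cont_ex_RInt; auto; lra).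
      assert (RInt f a b0 <= RInt f a x) by (apply Rint_nonneg_mono; auto; lra).
      assert (RInt f a x <= L) by (apply HL1; exists x; split; [lra|auto]).
      unfold Rabs; destruct Rcase_abs; lra.
    + exfalso. assert (L <= L - eps); [|lra].
      apply HL2. intros y [b [Hb ->]].
      destruct (Rle_dec (RInt f a b) (L - eps)) as [|Hn2]; auto.
      exfalso; apply Hn; exists b; split; auto; lra.
Qed.

Lemma tail_int f a L z : (forall x, a <= x -> continuous f x) -> improper_int f a L -> a <= z ->
  improper_int f z (L - RInt f a z).
Proof.
  intros Hc [_ Hl] Hz. split.
  - intros b Hb. exists (ex_RInt_Reals_0 _ _ _ (cont_ex_RInt f z b (fun x H => Hc x ltac:(lra)) Hb)); trivial.
  - intros eps Heps. destruct (Hl eps Heps) as [M HM]. exists (Rmax M z). intros x Hx.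
    assert (Mx : M <= x) by (eapply Rle_trans; [apply Rmax_l|apply Hx]).
    assert (zx : z <= x) by (eapply Rle_trans; [apply Rmax_r|apply Hx]).
    specialize (HM x Mx).
    rewrite Rint_RInt in HM by (apply cont_ex_RInt; auto; lra).
    rewrite Rint_RInt by (apply cont_ex_RInt; [intros; apply Hc; lra| lra]).
    rewrite <- (RInt_Chasles f a z x) in HM by (apply cont_ex_RInt; [intros; apply Hc; lra| lra]).
    revert HM. unfold plus; simpl. intros HM.
    replace (RInt f z x - (L - RInt f a z)) with (RInt f a z + RInt f z x - L) by ring. auto.
Qed.

Lemma deriv_RInt f a z : (forall x, a <= x -> continuous f x) -> a < z ->
  derivable_pt_lim (fun x => RInt f a x) z (f z).
Proof.
  intros Hc Hz. apply is_derive_Reals. apply (is_derive_RInt f (RInt f a) a z).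
  - assert (Hd : 0 < z - a) by lra. exists (mkposreal _ Hd). intros y Hy.
    apply RInt_correct. apply cont_ex_RInt; auto.
    unfold ball in Hy; simpl in Hy; unfold AbsRing_ball, abs, minus, plus, opp in Hy; simpl in Hy.
    revert Hy; unfold Rabs; destruct Rcase_abs; lra.
  - apply Hc; lra.
Qed.

Lemma exp_le x y : x <= y -> exp x <= exp y.
Proof. intros [H | ->]; [left; apply exp_increasing; auto| right; auto]. Qed.

Lemma dcont f x l : derivable_pt_lim f x l -> continuity_pt f x.
Proof. intros H. apply derivable_continuous_pt. exists l; exact H. Qed.

Lemma dcont' f x l : derivable_pt_lim f x l -> continuous f x.
Proof. intros H. apply continuity_pt_filterlim. eapply dcont; eauto. Qed.

Lemma mvt f df x y : x <= y -> (forall c, x <= c <= y -> derivable_pt_lim f c (df c)) ->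
  exists c, x <= c <= y /\ f y - f x = df c * (y - x).
Proof.
  intros Hxy Hd. destruct (MVT_gen f x y df) as [c [Hc Heq]].
  - intros z Hz. rewrite Rmin_left, Rmax_right in Hz by lra. apply is_derive_Reals, Hd; lra.
  - intros z Hz. rewrite Rmin_left, Rmax_right in Hz by lra. eapply dcont, Hd; lra.
  - rewrite Rmin_left, Rmax_right in Hc by lra. exists c; auto.
Qed.

Lemma improper_props (f : R -> R) a L : improper_int f a L -> (forall x, a <= x -> 0 <= f x) ->
  (forall b, a <= b -> ex_RInt f a b /\ RInt f a b <= L) /\ 0 <= L.
Proof.
  intros [Hi Hl] Hp.
  assert (Hex : forall b, a <= b -> ex_RInt f a b).
  { intros b Hb. destruct (Hi b Hb) as [pr _]. apply ex_RInt_Reals_1; auto. }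
  assert (Hmono : forall x y, a <= x <= y -> Rint f a x <= Rint f a y).
  { intros x y Hxy. rewrite !Rint_RInt by (apply Hex; lra).
    assert (e1 : ex_RInt f a x) by (apply (ex_RInt_Chasles_1 f a x y); [lra|apply Hex; lra]).
    assert (e2 : ex_RInt f x y) by (apply (ex_RInt_Chasles_2 f a x y); [lra|apply Hex; lra]).
    rewrite <- (RInt_Chasles f a x y e1 e2). unfold plus; simpl.
    assert (0 <= RInt f x y); [|lra]. apply RInt_ge_0; auto; [lra|]. intros; apply Hp; lra. }
  split.
  - intros b Hb. split; [apply Hex; auto|].
    rewrite <- Rint_RInt by (apply Hex; auto). eapply mono_le_lim; eauto.
  - apply (lim_ge0 (fun b => Rint f a b) a); auto. intros x Hx.
    rewrite Rint_RInt by (apply Hex; auto). apply RInt_ge_0; auto. intros; apply Hp; lra.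
Qed.

Lemma deriv_const_minus G z l C : derivable_pt_lim G z l -> derivable_pt_lim (fun x => C - G x) z (- l).
Proof.
  intros H. pose proof (derivable_pt_lim_minus (fct_cte C) G z 0 l (derivable_pt_lim_const C z) H) as H'.
  replace (-l) with (0 - l) by ring. exact H'.
Qed.

Lemma deriv_mult f g z lf lg : derivable_pt_lim f z lf -> derivable_pt_lim g z lg ->
  derivable_pt_lim (fun x => f x * g x) z (lf * g z + f z * lg).
Proof. intros Hf Hg. exact (derivable_pt_lim_mult f g z lf lg Hf Hg). Qed.

Lemma deriv_lin2 f g z lf lg A B : derivable_pt_lim f z lf -> derivable_pt_lim g z lg ->
  derivable_pt_lim (fun x => f x * A - g x * B) z (lf * A - lg * B).
Proof.
  intros Hf Hg.
  pose proof (deriv_mult f (fct_cte A) z lf 0 Hf (derivable_pt_lim_const A z)) as H1'.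
  pose proof (deriv_mult g (fct_cte B) z lg 0 Hg (derivable_pt_lim_const B z)) as H2'.
  pose proof (derivable_pt_lim_minus _ _ z _ _ H1' H2') as H.
  unfold fct_cte in H. replace (lf * A - lg * B) with (lf * A + f z * 0 - (lg * B + g z * 0)) by ring.
  exact H.
Qed.

Lemma lim_abs_le (F G : R -> R) W c1 c2 k e : lim_infty F 0 -> lim_infty G 0 -> 0 <= e ->
  (forall w, W <= w -> Rabs (F w - c1 - k * (G w - c2)) <= e * Rabs (G w - c2)) ->
  Rabs (c1 - k * c2) <= e * Rabs c2.
Proof.
  intros HF HG He H.
  destruct (Rle_dec (Rabs (c1 - k * c2)) (e * Rabs c2)) as [|Hn]; auto. exfalso.
  set (d := Rabs (c1 - k * c2) - e * Rabs c2).
  assert (Hd : 0 < d) by (unfold d; lra).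
  set (eta := d / (2 * (1 + Rabs k + e))).
  assert (Hk := Rabs_pos k).
  assert (Heta : 0 < eta) by (unfold eta; apply Rdiv_lt_0_compat; lra).
  destruct (HF _ Heta) as [M1 HM1]. destruct (HG _ Heta) as [M2 HM2].
  set (w := Rmax W (Rmax M1 M2)).
  assert (Ww : W <= w) by apply Rmax_l.
  assert (M1w : M1 <= w) by (eapply Rle_trans; [apply Rmax_l| apply Rmax_r]).
  assert (M2w : M2 <= w) by (eapply Rle_trans; [apply Rmax_r| apply Rmax_r]).
  specialize (HM1 w M1w). specialize (HM2 w M2w). specialize (H w Ww).
  rewrite Rminus_0_r in HM1, HM2.
  assert (T1 : Rabs (c1 - k * c2) <= Rabs (F w - c1 - k * (G w - c2)) + Rabs (F w) + Rabs k * Rabs (G w)).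
  { rewrite <- Rabs_mult.
    replace (c1 - k * c2) with (- (F w - c1 - k * (G w - c2)) + (F w - k * G w)) by ring.
    eapply Rle_trans; [apply Rabs_triang|]. rewrite Rabs_Ropp.
    assert (Rabs (F w - k * G w) <= Rabs (F w) + Rabs (k * G w)); [|lra].
    unfold Rminus; rewrite <- (Rabs_Ropp (k * G w)); apply Rabs_triang. }
  assert (T2 : Rabs (G w - c2) <= Rabs (G w) + Rabs c2).
  { unfold Rminus. rewrite <- (Rabs_Ropp c2). apply Rabs_triang. }
  assert (T3 : eta * (2 * (1 + Rabs k + e)) = d) by (unfold eta; field; lra).
  assert (Rabs k * Rabs (G w) <= Rabs k * eta) by (apply Rmult_le_compat_l; lra).
  assert (e * Rabs (G w - c2) <= e * (eta + Rabs c2)) by (apply Rmult_le_compat_l; lra).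
  assert (T4 : e * (eta + Rabs c2) + eta + Rabs k * eta = e * Rabs c2 + d / 2) by (rewrite <- T3; field).
  unfold d in T4. lra.
Qed.

Lemma tail_lim (f : R -> R) a L : (forall x, a <= x -> continuous f x) -> improper_int f a L ->
  lim_infty (fun z => L - RInt f a z) 0.
Proof.
  intros Hc [_ Hl] eps He. destruct (Hl eps He) as [M HM]. exists (Rmax M a). intros x Hx.
  assert (M <= x) by (eapply Rle_trans; [apply Rmax_l|apply Hx]).
  assert (a <= x) by (eapply Rle_trans; [apply Rmax_r|apply Hx]).
  specialize (HM x H). rewrite Rint_RInt in HM by (apply cont_ex_RInt; auto).
  rewrite Rminus_0_r, Rabs_minus_sym. exact HM.
Qed.

Theorem mainTheorem14 (q dq : R -> R)
  (Hderiv : forall x, 0 <= x -> derivable_pt_lim q x (dq x))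
  (Hcont : forall x, 0 <= x -> continuity_pt dq x)
  (HH1 : H1 q) (HH2 : H2 q dq)
  (b : R)
  (Hb : lim_infty (fun z => dq z * Iinf (fun x => / q x) z) b) :
  0 <= b /\
  lim_infty (fun z => dq z / q z * sqrt (Iinf (fun x => / q x) z)) 0 /\
  lim_infty (fun z => Iinf (fun x => / q x) z /
                      ((q z)^2 * Iinf (fun x => / (q x)^3) z)) (2 * b + 1).
Proof.
  destruct HH2 as [Hinf Hdq].
  assert (qcont : forall x, 0 <= x -> continuous q x) by (intros x Hx; eapply dcont', Hderiv, Hx).
  destruct (Hinf 1) as [M0 HM0].
  set (X0 := Rmax M0 1).
  assert (X01 : 1 <= X0) by apply Rmax_r.
  assert (qpos : forall x, X0 <= x -> 1 < q x).
  { intros x Hx. apply HM0. eapply Rle_trans; [apply Rmax_l|apply Hx]. }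
  assert (uderiv : forall x, X0 <= x -> derivable_pt_lim (fun x => / q x) x (- dq x / (q x)^2)).
  { intros x Hx. apply is_derive_Reals, is_derive_inv.
    - apply is_derive_Reals, Hderiv; lra.
    - specialize (qpos x Hx); lra. }
  assert (ucont : forall x, X0 <= x -> continuous (fun x => / q x) x).
  { intros x Hx; eapply dcont', uderiv, Hx. }
  assert (Ubound : forall eps, 0 < eps -> exists Z, X0 <= Z /\ forall y x, Z <= y ->
            y <= x <= y + / (2 * eps * q y) -> / (2 * q y) <= / q x).
  { intros eps He. destruct (Hdq eps He) as [M HM]. exists (Rmax M X0). split; [apply Rmax_r|].
    intros y x Hy Hx.
    assert (MX : M <= y /\ X0 <= y) by (split; eapply Rle_trans; [apply Rmax_l|apply Hy|apply Rmax_r|apply Hy]).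
    destruct (mvt (fun x => / q x) (fun x => - dq x / (q x)^2) y x) as [c [Hc Heq]]; [lra| |].
    { intros c Hc; apply uderiv; lra. }
    specialize (HM c ltac:(lra)). rewrite Rminus_0_r in HM.
    assert (Hqy := qpos y ltac:(lra)).
    set (t := dq c / q c ^ 2) in *.
    replace (- dq c / q c ^ 2) with (- t) in Heq by (unfold t, Rdiv; ring).
    assert (Ht : - eps < t < eps) by (revert HM; unfold Rabs; destruct Rcase_abs; lra).
    assert (E1 : eps * / (2 * eps * q y) = / (2 * q y)) by (field; lra).
    assert (E2 : / (2 * q y) = / q y - / (2 * q y)) by (field; lra).
    assert (t * (x - y) <= eps * (x - y)) by (apply Rmult_le_compat_r; lra).
    assert (eps * (x - y) <= eps * / (2 * eps * q y)) by (apply Rmult_le_compat_l; lra).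
    lra. }
  destruct (Ubound (/2) ltac:(lra)) as [Z1 [HZ1 HU1]].
  assert (HU1' : forall y x, Z1 <= y -> y <= x <= y + / q y -> q x <= 2 * q y).
  { intros y x Hy Hx. assert (Hqy := qpos y ltac:(lra)). assert (Hqx := qpos x ltac:(lra)).
    assert (Hi := HU1 y x Hy ltac:(replace (2 * / 2 * q y) with (q y) by field; lra)).
    apply Rinv_le_contravar in Hi; [rewrite !Rinv_inv in Hi; lra | apply Rinv_0_lt_compat; lra]. }
  assert (gammaG : forall x, 0 <= x -> gamma q x = 2 * RInt q 0 x).
  { intros x Hx. unfold gamma. rewrite Rint_RInt; auto. apply cont_ex_RInt; auto. }
  destruct HH1 as [HE [LF HF]].
  assert (Epos : forall y, 0 <= y -> (0 <= Iinf (fun xi => exp (- gamma q xi)) y) /\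
     (forall b, y <= b -> RInt (fun xi => exp (- gamma q xi)) y b <= Iinf (fun xi => exp (- gamma q xi)) y
        /\ ex_RInt (fun xi => exp (- gamma q xi)) y b)).
  { intros y Hy. destruct (HE y Hy) as [L HL]. rewrite (Iinf_eq _ _ _ HL).
    destruct (improper_props _ _ _ HL) as [P1 P2]; [intros; left; apply exp_pos|].
    split; auto. intros b0 Hb0; destruct (P1 b0 Hb0); auto. }
  assert (Flow : forall y, Z1 <= y -> exp (-4) * / q y <=
     exp (gamma q y) * Iinf (fun xi => exp (- gamma q xi)) y).
  { intros y Hy. assert (Hqy := qpos y ltac:(lra)).
    assert (Hh : 0 < / q y) by (apply Rinv_0_lt_compat; lra).
    destruct (Epos y ltac:(lra)) as [_ HEy]. destruct (HEy (y + / q y) ltac:(lra)) as [HEy1 HEy2].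
    assert (Hlow : RInt (fun _ => exp (- gamma q y - 4)) y (y + / q y) <=
                   RInt (fun xi => exp (- gamma q xi)) y (y + / q y)).
    { apply RInt_le; auto; [lra| apply ex_RInt_const|].
      intros xi Hxi. apply exp_le.
      destruct (mvt (fun x => RInt q 0 x) q y xi) as [c [Hc Heq]]; [lra| |].
      { intros c Hc. apply deriv_RInt; auto; lra. }
      rewrite !gammaG by lra.
      assert (q c <= 2 * q y) by (apply (HU1' y c); lra).
      assert (Hqc := qpos c ltac:(lra)).
      assert (Hm : q c * (xi - y) <= 2 * q y * / q y).
      { apply Rmult_le_compat; lra. }
      replace (2 * q y * / q y) with 2 in Hm by (field; lra). lra. }
    rewrite RInt_const in Hlow. unfold scal in Hlow; simpl in Hlow; unfold mult in Hlow; simpl in Hlow.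
    replace (y + / q y - y) with (/ q y) in Hlow by ring.
    assert (Hg := exp_pos (gamma q y)).
    apply Rle_trans with (exp (gamma q y) * (/ q y * exp (- gamma q y - 4))).
    - replace (- gamma q y - 4) with (-4 + - gamma q y) by ring.
      rewrite exp_plus, exp_Ropp. right; field. split; lra.
    - apply Rmult_le_compat_l; lra. }
  set (F := fun y => exp (gamma q y) * Iinf (fun xi => exp (- gamma q xi)) y) in *.
  destruct (improper_props F 0 LF HF) as [HF1 _].
  { intros x Hx. unfold F. apply Rmult_le_pos; [left; apply exp_pos| apply Epos; auto]. }
  assert (uc : forall x, Z1 <= x -> continuous (fun x => / q x) x) by (intros; apply ucont; lra).
  assert (ub : forall b0, Z1 <= b0 -> RInt (fun x => / q x) Z1 b0 <= exp 4 * (LF - RInt F 0 Z1)).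
  { intros b0 Hb0.
    assert (Z10 : 0 <= Z1) by lra.
    destruct (HF1 b0 ltac:(lra)) as [ex0 le0]. destruct (HF1 Z1 Z10) as [ex1 _].
    assert (ex2 : ex_RInt F Z1 b0) by (apply (ex_RInt_Chasles_2 F 0 Z1 b0); [lra|auto]).
    assert (Ch := RInt_Chasles F 0 Z1 b0 ex1 ex2). unfold plus in Ch; simpl in Ch.
    assert (Sc : RInt (fun y => exp 4 * F y) Z1 b0 = exp 4 * RInt F Z1 b0) by (apply (RInt_scal F Z1 b0 (exp 4) ex2)).
    assert (Le : RInt (fun x => / q x) Z1 b0 <= RInt (fun y => exp 4 * F y) Z1 b0).
    { apply RInt_le; auto.
      - apply cont_ex_RInt; auto.
      - exact (ex_RInt_scal F Z1 b0 (exp 4) ex2).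
      - intros x Hx. assert (Hf := Flow x ltac:(lra)).
        assert (H4 := exp_pos 4).
        apply Rmult_le_compat_l with (r := exp 4) in Hf; [|lra].
        rewrite <- Rmult_assoc, <- exp_plus in Hf. replace (4 + -4) with 0 in Hf by ring.
        rewrite exp_0, Rmult_1_l in Hf. exact Hf. }
    assert (H4 := exp_pos 4).
    assert (RInt F Z1 b0 <= LF - RInt F 0 Z1) by lra.
    apply Rmult_le_compat_l with (r := exp 4) in H; lra. }
  destruct (mono_conv (fun x => / q x) Z1 _ uc
     (fun x Hx => ltac:(left; apply Rinv_0_lt_compat; specialize (qpos x ltac:(lra)); lra)) ub) as [L1 HL1].
  assert (vc : forall x, Z1 <= x -> continuous (fun x => / (q x)^3) x).
  { intros x Hx. assert (Hq := qpos x ltac:(lra)). apply (ex_derive_continuous (K:=R_AbsRing) (V:=R_NormedModule)). eexists.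
    apply is_derive_inv; [apply is_derive_pow; apply is_derive_Reals, Hderiv; lra|].
    apply pow_nonzero; lra. }
  assert (vle : forall x, Z1 <= x -> 0 <= / (q x)^3 <= / q x).
  { intros x Hx. assert (Hq := qpos x ltac:(lra)). split.
    - left; apply Rinv_0_lt_compat; apply pow_lt; lra.
    - apply Rinv_le_contravar; [lra|]. simpl. nra. }
  destruct (improper_props _ _ _ HL1) as [PU1 PU2].
  { intros x Hx; apply (Rle_trans _ _ _ (proj1 (vle x Hx)) (proj2 (vle x Hx))). }
  assert (vb : forall b0, Z1 <= b0 -> RInt (fun x => / (q x)^3) Z1 b0 <= L1).
  { intros b0 Hb0. destruct (PU1 b0 Hb0) as [e1 l1]. eapply Rle_trans; [|apply l1].
    apply RInt_le; auto; [apply cont_ex_RInt; auto|]. intros; apply vle; lra. }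
  destruct (mono_conv (fun x => / (q x)^3) Z1 _ vc (fun x Hx => proj1 (vle x Hx)) vb) as [L3 HL3].
  set (Icl := fun z => L1 - RInt (fun x => / q x) Z1 z).
  set (Jcl := fun z => L3 - RInt (fun x => / (q x)^3) Z1 z).
  assert (Ieq : forall z, Z1 <= z -> Iinf (fun x => / q x) z = Icl z).
  { intros z Hz. apply Iinf_eq, tail_int; auto. }
  assert (Jeq : forall z, Z1 <= z -> Iinf (fun x => / (q x)^3) z = Jcl z).
  { intros z Hz. apply Iinf_eq, tail_int; auto. }
  assert (Ipos : forall z, Z1 <= z -> 0 <= Icl z /\ forall b0, z <= b0 -> RInt (fun x => / q x) z b0 <= Icl z).
  { intros z Hz. destruct (improper_props _ _ _ (tail_int _ _ _ z uc HL1 Hz)) as [P1 P2].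
    { intros x Hx. left; apply Rinv_0_lt_compat. specialize (qpos x ltac:(lra)); lra. }
    split; auto. intros b0 Hb0; apply P1; auto. }
  assert (Jpos : forall z, Z1 <= z -> 0 < Jcl z).
  { intros z Hz. destruct (improper_props _ _ _ (tail_int _ _ _ z vc HL3 Hz)) as [P1 P2].
    { intros x Hx. apply vle; lra. }
    destruct (P1 (z + 1) ltac:(lra)) as [_ P3]. eapply Rlt_le_trans; [|apply P3].
    apply RInt_gt_0; [lra| |].
    - intros x Hx. apply Rinv_0_lt_compat, pow_lt. specialize (qpos x ltac:(lra)); lra.
    - intros; apply vc; lra. }
  assert (Ider : forall z, Z1 < z -> derivable_pt_lim Icl z (- / q z)).
  { intros z Hz. apply deriv_const_minus. apply (deriv_RInt (fun x => / q x)); auto. }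
  assert (Jder : forall z, Z1 < z -> derivable_pt_lim Jcl z (- / (q z)^3)).
  { intros z Hz. apply deriv_const_minus. apply (deriv_RInt (fun x => / (q x)^3)); auto. }
  assert (Ilim : lim_infty Icl 0) by (apply tail_lim; auto).
  assert (Jlim : lim_infty Jcl 0) by (apply tail_lim; auto).
  assert (Z1pos : 1 <= Z1) by lra.
  assert (qz : forall x, Z1 <= x -> 1 < q x) by (intros; apply qpos; lra).
  split; [|split].
  { destruct (Rle_dec 0 b) as [|Hn]; auto. exfalso.
    destruct (Hb (- b / 2) ltac:(lra)) as [M HM].
    set (Z2 := Rmax M Z1).
    assert (dneg : forall x, Z2 <= x -> dq x < 0).
    { intros x Hx. assert (M <= x) by (eapply Rle_trans; [apply Rmax_l|apply Hx]).
      assert (Z1 <= x) by (eapply Rle_trans; [apply Rmax_r|apply Hx]).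
      specialize (HM x H). rewrite Ieq in HM by lra. destruct (Ipos x H0) as [Ip _].
      assert (dq x * Icl x < b / 2) by (revert HM; unfold Rabs; destruct Rcase_abs; lra).
      destruct (Rlt_le_dec (dq x) 0); auto. nra. }
    assert (Z2Z1 : Z1 <= Z2) by apply Rmax_r.
    destruct (Hinf (q Z2)) as [M' HM']. set (x := Rmax M' Z2).
    specialize (HM' x (Rmax_l _ _)).
    assert (Z2x : Z2 <= x) by apply Rmax_r.
    destruct (mvt q dq Z2 x) as [c [Hc Heq]]; [lra| intros; apply Hderiv; lra |].
    assert (dq c < 0) by (apply dneg; lra).
    assert (dq c * (x - Z2) <= 0) by nra. lra. }
  { intros eps He.
    destruct (Hb 1 Rlt_0_1) as [M1 HM1].
    set (B := Rabs b + 1). assert (HB : 1 <= B) by (unfold B; assert (Hr := Rabs_pos b); lra).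
    set (e' := eps^2 / (8 * B^2)).
    assert (He' : 0 < e') by (unfold e'; apply Rdiv_lt_0_compat; [apply pow_lt; lra| apply Rmult_lt_0_compat; [lra| apply pow_lt; lra]]).
    destruct (Ubound e' He') as [Z [HZ HU]].
    exists (Rmax (Rmax M1 Z) Z1). intros z Hz.
    assert (M1z : M1 <= z) by (eapply Rle_trans; [apply Rmax_l|]; eapply Rle_trans; [apply Rmax_l|apply Hz]).
    assert (Zz : Z <= z) by (eapply Rle_trans; [apply Rmax_r|]; eapply Rle_trans; [apply Rmax_l|apply Hz]).
    assert (Z1z : Z1 <= z) by (eapply Rle_trans; [apply Rmax_r|apply Hz]).
    rewrite Ieq by lra. rewrite Rminus_0_r.
    specialize (HM1 z M1z). rewrite Ieq in HM1 by lra.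
    assert (Hqz := qz z Z1z).
    set (h := / (2 * e' * q z)).
    assert (Hh : 0 < h) by (unfold h; apply Rinv_0_lt_compat; nra).
    assert (Ilow : h * / (2 * q z) <= Icl z).
    { destruct (Ipos z Z1z) as [_ P]. eapply Rle_trans; [|apply (P (z + h)); lra].
      assert (Hc := RInt_const z (z + h) (/ (2 * q z))).
      unfold scal in Hc; simpl in Hc; unfold mult in Hc; simpl in Hc.
      replace (z + h - z) with h in Hc by ring. rewrite <- Hc.
      apply RInt_le; [lra| apply ex_RInt_const| apply cont_ex_RInt; [intros; apply uc|]; lra|].
      intros x Hx. apply (HU z x); auto. unfold h in Hx; lra. }
    set (I := Icl z) in *. set (D := dq z * I) in *.
    assert (HD : D * D <= B * B).
    { assert (Hr := Rabs_pos b). assert (-1 < D - b < 1) by (revert HM1; unfold Rabs; destruct Rcase_abs; lra).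
      assert (- B <= D <= B) by (unfold B; revert Hr; unfold Rabs; destruct Rcase_abs; lra).
      assert (0 <= (B - D) * (B + D)) by (apply Rmult_le_pos; lra). lra. }
    assert (HI : 0 < I).
    { eapply Rlt_le_trans; [|apply Ilow]. apply Rmult_lt_0_compat; auto. apply Rinv_0_lt_compat; lra. }
    assert (HP : 1 <= 4 * e' * (q z ^ 2 * I)).
    { replace 1 with (4 * e' * (q z ^ 2 * (h * / (2 * q z)))) by (unfold h; field; split; lra).
      apply Rmult_le_compat_l; [lra|]. apply Rmult_le_compat_l; [apply pow_le; lra|auto]. }
    assert (Hsq : (dq z / q z * sqrt I) * (dq z / q z * sqrt I) = D * D / (q z ^ 2 * I)).
    { replace ((dq z / q z * sqrt I) * (dq z / q z * sqrt I)) with (dq z * dq z / (q z * q z) * (sqrt I * sqrt I)) by (field; lra).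
      rewrite sqrt_sqrt by lra. unfold D. field. split; lra. }
    assert (Hlt : D * D / (q z ^ 2 * I) < eps * eps).
    { set (P := q z ^ 2 * I) in *.
      assert (HqI : 0 < P) by (unfold P; apply Rmult_lt_0_compat; [apply pow_lt; lra|lra]).
      assert (E8 : 2 * B ^ 2 * (4 * e' * P) = eps * eps * P) by (unfold e'; field; lra).
      assert (HBB : 0 < B * B) by (apply Rmult_lt_0_compat; lra).
      assert (HB2 : B * B < 2 * B ^ 2 * 1) by (simpl; lra).
      assert (2 * B ^ 2 * 1 <= 2 * B ^ 2 * (4 * e' * P)) by (apply Rmult_le_compat_l; [apply Rmult_le_pos; [lra| apply pow_le; lra]|auto]).
      assert (Hk : D * D < eps * eps * P) by lra.
      replace (eps * eps) with (eps * eps * P * / P) by (field; lra).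
      unfold Rdiv. apply Rmult_lt_compat_r; [apply Rinv_0_lt_compat; lra| lra]. }
    set (x := dq z / q z * sqrt I) in *.
    destruct (Rlt_le_dec (Rabs x) eps) as [|Hge]; auto. exfalso.
    assert (Rabs x * Rabs x = x * x) by (rewrite <- Rabs_mult; apply Rabs_pos_eq; apply Rle_0_sqr).
    assert (eps * eps <= Rabs x * Rabs x) by (apply Rmult_le_compat; lra).
    lra. }
  set (f := fun x => Icl x * (/ q x * / q x)).
  assert (fder : forall c, Z1 < c -> derivable_pt_lim f c (- (/ q c * / q c * / q c) * (1 + 2 * dq c * Icl c))).
  { intros c Hc. assert (Hu := uderiv c ltac:(lra)). assert (Hqc := qz c ltac:(lra)).
    assert (H := deriv_mult _ _ c _ _ (Ider c Hc) (deriv_mult _ _ c _ _ Hu Hu)).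
    match type of H with derivable_pt_lim _ _ ?l => replace (- (/ q c * / q c * / q c) * (1 + 2 * dq c * Icl c)) with l end.
    - exact H.
    - field. lra. }
  assert (flim : lim_infty f 0).
  { intros eps He. destruct (Ilim eps He) as [M HM]. exists (Rmax M Z1). intros x Hx.
    assert (M <= x) by (eapply Rle_trans; [apply Rmax_l|apply Hx]).
    assert (Z1 <= x) by (eapply Rle_trans; [apply Rmax_r|apply Hx]).
    specialize (HM x H). rewrite Rminus_0_r in *. unfold f.
    assert (Hq := qz x H0). assert (Hu : 0 < / q x < 1).
    { split; [apply Rinv_0_lt_compat; lra|]. rewrite <- Rinv_1. apply Rinv_lt_contravar; lra. }
    rewrite Rabs_mult. assert (0 <= Rabs (/ q x * / q x) <= 1).
    { rewrite Rabs_pos_eq by (apply Rmult_le_pos; lra). split; [apply Rmult_le_pos; lra|].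
      replace 1 with (1 * 1) by ring. apply Rmult_le_compat; lra. }
    assert (Hr := Rabs_pos (Icl x)).
    assert (Rabs (Icl x) * Rabs (/ q x * / q x) <= Rabs (Icl x) * 1) by (apply Rmult_le_compat_l; lra).
    lra. }
  intros eps He.
  destruct (Hb (eps / 4) ltac:(lra)) as [M HM].
  exists (Rmax M (Z1 + 1)). intros z Hz.
  assert (Mz : M <= z) by (eapply Rle_trans; [apply Rmax_l|apply Hz]).
  assert (Z1z : Z1 + 1 <= z) by (eapply Rle_trans; [apply Rmax_r|apply Hz]).
  assert (Hmain : Rabs (f z - (2 * b + 1) * Jcl z) <= eps / 2 * Rabs (Jcl z)).
  { apply (lim_abs_le f Jcl z); auto; [lra|].
    intros w Hw.
    destruct (Req_dec w z) as [->|Hwz].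
    { replace (f z - f z - (2 * b + 1) * (Jcl z - Jcl z)) with 0 by ring.
      rewrite Rabs_R0. apply Rmult_le_pos; [lra| apply Rabs_pos]. }
    set (A := Jcl w - Jcl z). set (C := f w - f z).
    destruct (mvt (fun x => f x * A - Jcl x * C)
                  (fun x => - (/ q x * / q x * / q x) * (1 + 2 * dq x * Icl x) * A - (- / (q x)^3) * C) z w)
      as [c [Hc Heq]]; [lra| |].
    { intros c Hc. apply deriv_lin2; [apply fder| apply Jder]; lra. }
    cbv beta in Heq.
    assert (Hqc := qz c ltac:(lra)).
    assert (Hk : C = (1 + 2 * dq c * Icl c) * A).
    { assert (E0 : f w * A - Jcl w * C - (f z * A - Jcl z * C) = 0) by (unfold A, C; ring).
      rewrite E0 in Heq.
      assert (Hne : w - z <> 0) by lra.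
      assert (E1 : - (/ q c * / q c * / q c) * (1 + 2 * dq c * Icl c) * A - - / q c ^ 3 * C = 0).
      { symmetry in Heq. apply Rmult_integral in Heq as [|]; [auto| contradiction]. }
      replace (- (/ q c * / q c * / q c) * (1 + 2 * dq c * Icl c) * A - - / q c ^ 3 * C)
        with ((/ q c * / q c * / q c) * (C - (1 + 2 * dq c * Icl c) * A)) in E1 by (field; lra).
      apply Rmult_integral in E1 as [E1|E1].
      - exfalso. assert (0 < / q c * / q c * / q c); [|lra].
        assert (0 < / q c) by (apply Rinv_0_lt_compat; lra).
        apply Rmult_lt_0_compat; [apply Rmult_lt_0_compat|]; lra.
      - lra. }
    specialize (HM c ltac:(lra)). rewrite Ieq in HM by lra.
    replace (C - (2 * b + 1) * A) with (2 * (dq c * Icl c - b) * A) by (rewrite Hk; ring).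
    rewrite !Rabs_mult. rewrite (Rabs_pos_eq 2) by lra.
    assert (Hr := Rabs_pos A).
    assert (Rabs (dq c * Icl c - b) * Rabs A <= eps / 4 * Rabs A) by (apply Rmult_le_compat_r; lra).
    lra. }
  assert (HJ := Jpos z ltac:(lra)). assert (Hqz := qz z ltac:(lra)).
  rewrite Ieq, Jeq by lra. rewrite (Rabs_pos_eq (Jcl z)) in Hmain by lra.
  replace (Icl z / (q z ^ 2 * Jcl z) - (2 * b + 1)) with ((f z - (2 * b + 1) * Jcl z) / Jcl z)
    by (unfold f; field; split; lra).
  unfold Rdiv. rewrite Rabs_mult, (Rabs_pos_eq (/ Jcl z)) by (left; apply Rinv_0_lt_compat; lra).
  apply Rmult_le_compat_r with (r := / Jcl z) in Hmain; [|left; apply Rinv_0_lt_compat; lra].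
  replace (eps / 2 * Jcl z * / Jcl z) with (eps / 2) in Hmain by (field; lra). lra.
Qed.
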